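(* $URD(6;K_2,S(C_3))\supseteq J(6)=\{(1,2),(5,0)\}$; that is, for each $(r,s)\in\{(1,2),(5,0)\}$ there exists a partition of the edge set of $K_6$ into $r$ 1-factors and $s$ classes each consisting of a single 3-sun spanning all six vertices.
   Context: A 3-sun is the graph on $6$ distinct vertices $a_1,a_2,a_3,b_1,b_2,b_3$ consisting of the triangle $(a_1,a_2,a_3)$ together with the edges $\{a_i,b_i\}$, $i=1,2,3$. $URD(v;K_2,S(C_3))$ denotes the set of pairs $(r,s)$ such that the edge set of $K_v$ can be partitioned into $r$ 1-factors and $s$ classes each of which is a set of vertex-disjoint 3-suns covering every vertex exactly once. *)

(* Defs.v *)
From mathcomp Require Import all_boot.
Set Implicit Arguments. Unset Strict Implicit. Unset Printing Implicit Defensive.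

Definition edges (v : nat) : {set {set 'I_v}} := [set e : {set 'I_v} | #|e| == 2].

Definition one_factor (v : nat) (F : {set {set 'I_v}}) : Prop :=
  F \subset edges v /\ forall x : 'I_v, #|[set e in F | x \in e]| = 1.

(* A 3-sun, given by its 6 vertices (a1,a2,a3,b1,b2,b3), which must be distinct:
   triangle (a1,a2,a3) plus pendant edges {a_i,b_i}. *)
Record sun (v : nat) := Sun { a1 : 'I_v; a2 : 'I_v; a3 : 'I_v;
                              b1 : 'I_v; b2 : 'I_v; b3 : 'I_v }.

Definition sun_verts v (S : sun v) : seq 'I_v :=
  [:: a1 S; a2 S; a3 S; b1 S; b2 S; b3 S].

Definition sun_ok v (S : sun v) : bool := uniq (sun_verts S).

Definition sun_edges v (S : sun v) : {set {set 'I_v}} :=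
  [set [set a1 S; a2 S]; [set a2 S; a3 S]; [set a1 S; a3 S];
       [set a1 S; b1 S]; [set a2 S; b2 S]; [set a3 S; b3 S]].

Definition sun_factor v (C : seq (sun v)) : Prop :=
  all (@sun_ok v) C /\
  forall x : 'I_v, count (fun S => x \in sun_verts S) C = 1.

Definition sun_factor_edges v (C : seq (sun v)) : {set {set 'I_v}} :=
  \bigcup_(S <- C) sun_edges S.

(* (r,s) in URD(v; K_2, S(C_3)): the edge set of K_v is partitioned into
   r 1-factors and s 3-sun factors. *)
Definition URD (v r s : nat) : Prop :=
  exists (F : 'I_r -> {set {set 'I_v}}) (C : 'I_s -> seq (sun v)),
    (forall i, one_factor (F i)) /\ (forall j, sun_factor (C j)) /\
    (forall e, e \in edges v ->
       #|[set i | e \in F i]| + #|[set j | e \in sun_factor_edges (C j)]| = 1).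

(* Main.v *)
Require Import Defs.
From mathcomp Require Import all_boot.

Lemma set2_eqE (T : finType) (x y a b : T) : x != y ->
  ([set x; y] == [set a; b]) = ((x == a) && (y == b)) || ((x == b) && (y == a)).
Proof.
move=> nxy; apply/eqP/orP.
- move=> E.
  have hx : x \in [set a; b] by rewrite -E !inE eqxx.
  have hy : y \in [set a; b] by rewrite -E !inE eqxx orbT.
  move: hx hy nxy; rewrite !inE => /orP[]/eqP-> /orP[]/eqP->; rewrite ?eqxx //=.
  + by move=> _; left.
  + by move=> _; right.
- by case=> /andP[/eqP-> /eqP->] //; rewrite setUC.
Qed.

Lemma card_setP (T : finType) (P : pred T) : #|[set x | P x]| = \sum_x (P x : nat).
Proof. by rewrite -sum1dep_card big_mkcond; apply: eq_bigr => x _; case: (P x). Qed.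

Lemma card3 (T : finType) (A B C : T) (P : pred T) :
  A != B -> A != C -> B != C ->
  #|[set e in [set A; B; C] | P e]| = P A + P B + P C.
Proof.
move=> hab hac hbc.
rewrite card_setP.
transitivity (\sum_(e in [set A; B; C]) (P e : nat)).
  rewrite [RHS]big_mkcond /=; apply: eq_bigr => e _; by case: (_ \in _); case: (P e).
rewrite -setUA big_setU1 /=; last by rewrite !inE negb_or hab hac.
rewrite big_setU1 /=; last by rewrite !inE hbc.
by rewrite big_set1 addnA.
Qed.

Definition o (k : nat) (H : k < 6) : 'I_6 := Ordinal H.
Notation "## k" := (o k isT) (at level 0, k at level 0).
Definition ed (x y : 'I_6) : {set 'I_6} := [set x; y].

Definition F1 (i : 'I_1) : {set {set 'I_6}} := [set ed ##0 ##4; ed ##1 ##5; ed ##2 ##3].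
Definition S1 : sun 6 := Sun ##0 ##1 ##2 ##3 ##4 ##5.
Definition S2 : sun 6 := Sun ##3 ##4 ##5 ##1 ##2 ##0.
Definition C2 (j : 'I_2) : seq (sun 6) := if val j == 0 then [:: S1] else [:: S2].

Definition F5 (i : 'I_5) : {set {set 'I_6}} :=
  match val i with
  | 0 => [set ed ##0 ##5; ed ##1 ##4; ed ##2 ##3]
  | 1 => [set ed ##1 ##5; ed ##2 ##0; ed ##3 ##4]
  | 2 => [set ed ##2 ##5; ed ##3 ##1; ed ##4 ##0]
  | 3 => [set ed ##3 ##5; ed ##4 ##2; ed ##0 ##1]
  | _ => [set ed ##4 ##5; ed ##0 ##3; ed ##1 ##2]
  end.
Definition C0 (j : 'I_0) : seq (sun 6) := [::].

Ltac case6 x := case: x => [[|[|[|[|[|[|k]]]]]] Hk] //.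
Ltac case6b x := case: x => [[|[|[|[|[|[|k2]]]]]] Hk2] //.

Lemma of3 (a b c d e f : 'I_6) :
  a != b -> c != d -> e != f ->
  ed a b != ed c d -> ed a b != ed e f -> ed c d != ed e f ->
  (forall x, (x \in ed a b) + (x \in ed c d) + (x \in ed e f) = 1) ->
  one_factor [set ed a b; ed c d; ed e f].
Proof.
move=> h1 h2 h3 h4 h5 h6 h; split.
- by rewrite !subUset !sub1set !inE /ed !cards2 h1 h2 h3.
- by move=> x; rewrite card3.
Qed.

Theorem lemma3p1 : forall r s : nat, (r, s) \in [:: (1, 2); (5, 0)] -> URD 6 r s.
Proof.
move=> r s; rewrite !inE => /orP[] /eqP [-> ->].
- exists F1, C2; split; [|split].
  + move=> i; apply: of3; rewrite /ed ?set2_eqE //; move=> x; rewrite !inE; case6 x.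
  + move=> j; split.
      by case: j => [[|[|]]] //= _.
    by move=> x; case: j => [[|[|]]] //= _; case6 x.
  + move=> e; rewrite inE => /cards2P [x [y [nxy ->]]].
    rewrite !card_setP !big_ord_recr !big_ord0 /=.
    rewrite /sun_factor_edges /= !big_cons !big_nil /F1 /sun_edges /= /ed !inE.
    rewrite !(@set2_eqE _ x y _ _ nxy) .
    by move: nxy; case6 x; case6b y.
- exists F5, C0; split; [|split].
  + move=> i; case: i => [[|[|[|[|[|k]]]]] Hi] //=; apply: of3; rewrite /ed ?set2_eqE //; move=> x; rewrite !inE; case6 x.
  + by case.
  + move=> e; rewrite inE => /cards2P [x [y [nxy ->]]].
    rewrite !card_setP !big_ord_recr !big_ord0 /=.
    rewrite /F5 /= /ed !inE.
    rewrite !(@set2_eqE _ x y _ _ nxy) .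
    by move: nxy; case6 x; case6b y.
Qed.
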